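(* Let $k\geq 1$ and $n\geq k+2$ be integers, and let $T_n$ be any $k$-tree with $n$ vertices. Then $$\det({\sf D}^{k}(T_n))=(-1)^{k(n-k)}\,k\,(k+1)^{n-k-1}(n-k).$$
   Context: A $k$-tree is either the complete graph on $k$ vertices, or a graph obtained from a smaller $k$-tree by adding a new vertex joined by $k$ edges to all vertices of a $k$-clique (complete subgraph on $k$ vertices). In a $k$-tree $T$, for $k$-cliques $\tau,\tau'$, a $k$-walk from $\tau$ to $\tau'$ is a sequence $\tau_1\sigma_1\tau_2\sigma_2\cdots\tau_l$ with $\tau_1=\tau$, $\tau_l=\tau'$, the $\tau_i$ being $k$-cliques and $\sigma_i$ a $(k+1)$-clique containing both $\tau_i$ and $\tau_{i+1}$; the $k$-distance $\operatorname{dist}^k(\tau,\tau')$ is the number of $(k+1)$-cliques in a shortest such walk. If $T$ has $c$ $k$-cliques $\tau_1,\dots,\tau_c$ (in any fixed order), the $k$-distance matrix ${\sf D}^k(T)$ is the $c\times c$ integer matrix with $(i,j)$-entry $0$ if $i=j$ and $\operatorname{dist}^k(\tau_i,\tau_j)$ otherwise (the determinant does not depend on the chosen order). *)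

(* Defs.v *)
From mathcomp Require Import all_boot all_order all_algebra.
From Stdlib Require Import ClassicalEpsilon.
Set Implicit Arguments. Unset Strict Implicit. Unset Printing Implicit Defensive.
Import GRing.Theory Num.Theory.
Local Open Scope ring_scope.

Section KTrees.
Variables (T : finType) (e : rel T).

Definition is_clique (S : {set T}) : bool :=
  [forall x in S, forall y in S, (x != y) ==> e x y].

Definition kclique (k : nat) (S : {set T}) : bool :=
  (#|S| == k)%N && is_clique S.

(* k-trees, built inductively on vertex subsets V (graph = induced subgraph
   on V): either a k-clique on k vertices, or a smaller k-tree on V plus a new
   vertex v whose neighbourhood inside V is exactly a k-clique C of it. *)
Inductive ktree_on (k : nat) : {set T} -> Prop :=
| ktree_base V : kclique k V -> ktree_on k V
| ktree_step V v (C : {set T}) : ktree_on k V -> v \notin V -> C \subset V ->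
    kclique k C -> [set u in V | e v u] = C -> ktree_on k (v |: V).

Definition is_ktree (k : nat) : Prop := ktree_on k [set: T].

(* A k-walk tau_1 sigma_1 tau_2 ... sigma_{l-1} tau_l from tau to tau' is
   encoded by tau and the list w = [:: (sigma_1, tau_2); ...; (sigma_{l-1}, tau_l)];
   the number of (k+1)-cliques in it is size w. *)
Fixpoint kwalk_from (k : nat) (tau : {set T}) (w : seq ({set T} * {set T}))
    (tau' : {set T}) : bool :=
  match w with
  | [::] => tau == tau'
  | (sigma, t) :: w' =>
      [&& kclique k.+1 sigma, tau \subset sigma, kclique k t, t \subset sigma
        & kwalk_from k t w' tau']
  end.

Definition is_kwalk (k : nat) (tau : {set T}) (w : seq ({set T} * {set T}))
    (tau' : {set T}) : bool :=
  kclique k tau && kwalk_from k tau w tau'.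

Definition has_kwalk_len (k : nat) (tau tau' : {set T}) (d : nat) : bool :=
  [exists w : d.-tuple ({set T} * {set T}), is_kwalk k tau w tau'].

(* k-distance: the number of (k+1)-cliques in a shortest k-walk
   (junk value 0 if no walk exists, which never happens in a k-tree). *)
Definition kdist (k : nat) (tau tau' : {set T}) : nat :=
  match excluded_middle_informative (exists d, has_kwalk_len k tau tau' d) with
  | left h => ex_minn h
  | right _ => 0%N
  end.

Definition kcliques (k : nat) : {set {set T}} := [set S | kclique k S].

Definition kdist_matrix (k : nat) : 'M[int]_#|kcliques k| :=
  \matrix_(i, j) (if i == j then 0%R
                  else ((kdist k (enum_val i) (enum_val j))%:Z)).

End KTrees.

(* Main.v *)
Require Import Defs.
From mathcomp Require Import all_boot all_order all_algebra.
Import GRing.Theory Num.Theory.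
Local Open Scope ring_scope.
From mathcomp Require Import perm zify ring.
Set Implicit Arguments. Unset Strict Implicit. Unset Printing Implicit Defensive.

(* Proof: block-matrix induction along the k-tree construction. *)

Lemma sum_deltaR (N : nat) (c : 'I_N) (x : 'I_N -> rat) :
  \sum_(l < N) x l * (l == c)%:R = x c.
Proof.
rewrite (bigD1 c) //= eqxx mulr1 big1 ?addr0 // => l /negbTE ->; by rewrite mulr0.
Qed.

Lemma sum_deltaL (N : nat) (c : 'I_N) (x : 'I_N -> rat) :
  \sum_(l < N) (c == l)%:R * x l = x c.
Proof.
rewrite (bigD1 c) //= eqxx mul1r big1 ?addr0 // => l; rewrite eq_sym => /negbTE ->; by rewrite mul0r.
Qed.

Lemma sum_deltaNL (N : nat) (c : 'I_N) (x : 'I_N -> rat) :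
  \sum_(l < N) - (l == c)%:R * x l = - x c.
Proof.
under eq_bigr do rewrite mulNr mulrC; by rewrite sumrN sum_deltaR.
Qed.

Lemma sum_deltaNR (N : nat) (c : 'I_N) (x : 'I_N -> rat) :
  \sum_(l < N) x l * - (l == c)%:R = - x c.
Proof.
under eq_bigr do rewrite mulrN; by rewrite sumrN sum_deltaR.
Qed.

Lemma constM (m n p : nat) (a b : rat) :
  (const_mx a : 'M[rat]_(m, n)) *m (const_mx b : 'M[rat]_(n, p)) = const_mx (a * b * n%:R).
Proof.
apply/matrixP => i j; rewrite !mxE.
under eq_bigr do rewrite !mxE.
by rewrite sumr_const card_ord mulr_natr.
Qed.

Lemma det_perm_inv (n : nat) (p : 'S_n) (g : 'I_n -> 'I_n -> rat) :
  \det (\matrix_(i, j) g (p i) (p j)) = \det (\matrix_(i, j) g i j).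
Proof.
have -> : \matrix_(i, j) g (p i) (p j) = row_perm p (col_perm p (\matrix_(i, j) g i j)).
  by apply/matrixP => i j; rewrite !mxE.
rewrite row_permE col_permE !det_mulmx !det_perm odd_permV.
by rewrite mulrCA -exprD -signr_odd oddD addbb expr0 mulr1.
Qed.

Lemma det_1J (k : nat) : \det (1%:M + const_mx 1 : 'M[rat]_k) = (k.+1)%:R.
Proof.
set P := block_mx (1%:M : 'M[rat]_1) (- const_mx 1 : 'M_(1, k)) (const_mx 1 : 'M_(k, 1)) (1%:M : 'M_k).
have h1 : (block_mx 1%:M (const_mx 1) 0 1%:M) *m P = block_mx ((k.+1)%:R%:M) 0 (const_mx 1) 1%:M.
  rewrite mulmx_block !mul1mx !mul0mx !add0r mulmx1 addNr; congr block_mx.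
  apply/matrixP => i j; rewrite !mxE.
  under eq_bigr do rewrite !mxE mulr1.
  by rewrite sumr_const card_ord !ord1 eqxx /= mulr1n -addn1 natrD addrC.
have h2 : (block_mx 1%:M 0 (- const_mx 1) 1%:M) *m P = block_mx 1%:M (- const_mx 1) 0 (1%:M + const_mx 1).
  rewrite mulmx_block !mul1mx !mul0mx !addr0 mulmx1 mulNmx addNr mulmxN opprK; congr block_mx.
  rewrite addrC; congr (_ + _); apply/matrixP => a b; rewrite !mxE.
  by rewrite big_ord1 !mxE mulr1.
have e1 := congr1 determinant h1; have e2 := congr1 determinant h2.
rewrite det_mulmx in e1. rewrite det_mulmx in e2.
rewrite (det_ublock (1%:M : 'M[rat]_1) (const_mx 1 : 'M_(1,k)) 1%:M) in e1.
rewrite (det_lblock ((k.+1)%:R%:M : 'M[rat]_1) (const_mx 1 : 'M_(k,1)) 1%:M) in e1.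
rewrite (det_lblock (1%:M : 'M[rat]_1) (- const_mx 1 : 'M_(k,1)) 1%:M) in e2.
rewrite (det_ublock (1%:M : 'M[rat]_1) (- const_mx 1 : 'M_(1,k)) (1%:M + const_mx 1)) in e2.
move: e1 e2; rewrite !det1 !mul1r det_scalar1 mulr1 => -> ->; done.
Qed.

Lemma key (N k : nat) (A : 'M[rat]_N) (c : 'I_N) :
  \det (block_mx A (\matrix_(i < N, j < k) (A i c + 1))
          (\matrix_(i < k, j < N) (A c j + 1))
          (\matrix_(i < k, j < k) (A c c + 1 - (i == j)%:R)))
  = (-1) ^+ k * (k.+1)%:R * \det (A + const_mx (k%:R / (k.+1)%:R)).
Proof.
set B := \matrix_(i < N, j < k) _; set Cm := \matrix_(i < k, j < N) _.
set Dm := \matrix_(i < k, j < k) _.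
set Lm : 'M[rat]_(k, N) := \matrix_(i, j) (- (j == c)%:R).
set L := block_mx (1%:M : 'M[rat]_N) 0 Lm (1%:M : 'M_k).
have hL : \det L = 1 by rewrite /L (det_lblock (1%:M : 'M[rat]_N) Lm 1%:M) !det1 mulr1.
have hM2 : L *m block_mx A B Cm Dm *m L^T =
   block_mx A (const_mx 1) (const_mx 1) (- (1%:M + const_mx 1)).
  rewrite /L tr_block_mx !trmx1 trmx0 !mulmx_block !mul1mx !mul0mx !mulmx1 !mulmx0 !addr0.
  have hC : Lm *m A + Cm = const_mx 1.
    apply/matrixP => i j; rewrite !mxE.
    under eq_bigr do rewrite !mxE.
    by rewrite sum_deltaNL addKr.
  rewrite hC; congr block_mx.
  - apply/matrixP => i j; rewrite !mxE.
    under eq_bigr do rewrite !mxE.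
    by rewrite sum_deltaNR addKr.
  - have hB : Lm *m B = const_mx (- (A c c + 1)).
      apply/matrixP => i j; rewrite !mxE.
      under eq_bigr do rewrite !mxE.
      by rewrite sum_deltaNL.
    have hS : (const_mx 1 : 'M[rat]_(k, N)) *m Lm^T = const_mx (- 1).
      apply/matrixP => i j; rewrite !mxE.
      under eq_bigr do rewrite !mxE.
      by rewrite sum_deltaNR.
    rewrite hB hS; apply/matrixP => i j; rewrite !mxE; ring.
have hD : \det (block_mx A B Cm Dm) = \det (block_mx A (const_mx 1) (const_mx 1) (- (1%:M + const_mx 1) : 'M[rat]_k)).
  by rewrite -hM2 !det_mulmx det_tr hL mul1r mulr1.
rewrite hD.
set B2 : 'M[rat]_(N, k) := const_mx 1; set C2 : 'M[rat]_(k, N) := const_mx 1.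
set D2 : 'M[rat]_k := - (1%:M + const_mx 1).
have hk0 : (k.+1)%:R != 0 :> rat by rewrite pnatr_eq0.
set a : rat := 1 / (k.+1)%:R.
set Di : 'M[rat]_k := - (1%:M - const_mx a).
have hDi : Di *m D2 = 1%:M.
  rewrite /Di /D2 mulNmx mulmxN opprK mulmxBl !mulmxDr !mul1mx !mulmx1 constM.
  apply/matrixP => i j; rewrite !mxE /a; field; by rewrite addrC natr1.
set U := block_mx (1%:M : 'M[rat]_N) (- (B2 *m Di)) 0 (1%:M : 'M_k).
have hU : \det U = 1 by rewrite /U (det_ublock (1%:M : 'M[rat]_N) (- (B2 *m Di)) 1%:M) !det1 mulr1.
have hUM : U *m block_mx A B2 C2 D2 = block_mx (A + const_mx (k%:R / (k.+1)%:R)) 0 C2 D2.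
  rewrite /U mulmx_block !mul1mx !mul0mx !add0r !mulNmx -[B2 *m Di *m D2]mulmxA hDi mulmx1 addrN.
  congr block_mx.
  rewrite /Di /B2 /C2 mulmxN mulmxBr mulmx1 !constM mulNmx mulmxBl !constM.
  apply/matrixP => i j; rewrite !mxE /a; field; by rewrite addrC natr1.
have := congr1 determinant hUM.
rewrite det_mulmx hU mul1r => ->.
rewrite (det_lblock (A + const_mx (k%:R / (k.+1)%:R)) C2 D2).
rewrite /D2 -scaleN1r detZ det_1J; ring.
Qed.


Local Close Scope ring_scope.


Section G.
Variables (T : finType) (e : rel T) (k : nat).
Hypotheses (e_sym : symmetric e) (e_irr : irreflexive e) (hk : 0 < k).

Definition KC (V : {set T}) := [set X : {set T} | kclique e k X & X \subset V].
Definition inW (W : {set T}) (w : seq ({set T} * {set T})) := all (fun p : {set T} * {set T} => p.1 \subset W) w.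
Definition isdist W tau tau' d :=
  (exists w, [&& is_kwalk e k tau w tau', inW W w & size w == d]) /\
  (forall w, is_kwalk e k tau w tau' -> inW W w -> d <= size w).

Lemma isdist_uniq W tau tau' d1 d2 : isdist W tau tau' d1 -> isdist W tau tau' d2 -> d1 = d2.
Proof.
move=> [[w1 /and3P [h1 i1 /eqP s1]] m1] [[w2 /and3P [h2 i2 /eqP s2]] m2].
apply/eqP; rewrite eqn_leq; apply/andP; split.
- by rewrite -s2; apply: m1.
- by rewrite -s1; apply: m2.
Qed.

Lemma isdist_refl W tau : kclique e k tau -> isdist W tau tau 0.
Proof.
move=> h; split; first by exists [::]; rewrite /is_kwalk /= h eqxx.
by [].
Qed.

Lemma kwalk_cat tau w1 tau' w2 tau'' : kwalk_from e k tau w1 tau' ->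
  kwalk_from e k tau' w2 tau'' -> kwalk_from e k tau (w1 ++ w2) tau''.
Proof.
elim: w1 tau => [|[s t] w IH] tau /=; first by move/eqP ->.
by move=> /and5P [-> -> -> -> h] h2 /=; apply: IH h h2.
Qed.

Lemma kdist_of tau tau' d : isdist setT tau tau' d -> kdist e k tau tau' = d.
Proof.
move=> hd; rewrite /kdist.
case: (ClassicalEpsilon.excluded_middle_informative _) => [h|h].
- case: ex_minnP => m /existsP [w hw] hmin.
  have [[w0 /and3P [h0 _ /eqP s0]] m0] := hd.
  apply/eqP; rewrite eqn_leq; apply/andP; split.
  + apply: hmin; apply/existsP.
    have sz : size w0 == d by rewrite s0.
    by exists (Tuple sz).
  + have := m0 (val w) hw; rewrite size_tuple; apply.
    by apply/allP => x _; apply: subsetT.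
- exfalso; apply: h; exists d.
  have [[w0 /and3P [h0 _ /eqP s0]] m0] := hd.
  apply/existsP; have sz : size w0 == d by rewrite s0.
  by exists (Tuple sz).
Qed.


Section Step.
Variables (V : {set T}) (v : T) (C : {set T}).
Hypotheses (vV : v \notin V) (CV : C \subset V) (Ck : kclique e k C)
  (hN : [set u in V | e v u] = C).

Let W := v |: V.
Definition pr (X : {set T}) := if v \in X then C else X.
Definition Nu (u : T) := v |: (C :\ u).

Lemma ev_C x : x \in C -> e v x.
Proof. by rewrite -hN inE => /andP []. Qed.

Lemma vC : v \notin C.
Proof. by apply/negP => /(subsetP CV); rewrite (negbTE vV). Qed.

Lemma cardC : #|C| = k.
Proof. by case/andP: Ck => /eqP. Qed.

Lemma sub_nbr (X : {set T}) : X \subset W -> v \in X -> is_clique e X -> X :\ v \subset C.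
Proof.
move=> XW vX /forallP cl; apply/subsetP => x; rewrite !inE => /andP [xv xX].
rewrite -hN inE.
have := subsetP XW x xX; rewrite !inE (negbTE xv) /= => ->.
have := cl v; rewrite vX /= => /forallP /(_ x); rewrite xX eq_sym xv; done.
Qed.

Lemma sigma_eq (s : {set T}) : kclique e k.+1 s -> s \subset W -> v \in s -> s = v |: C.
Proof.
move=> /andP [/eqP cs cl] sW vs.
have h := sub_nbr sW vs cl.
have e1 : s :\ v = C.
  apply/eqP; rewrite eqEcard h cardC.
  by move: cs; rewrite (cardsD1 v) vs /=; lia.
by rewrite -e1 setD1K.
Qed.

Lemma vC_clique : kclique e k.+1 (v |: C).
Proof.
apply/andP; split; first by rewrite cardsU1 vC cardC.
apply/forallP => x; apply/implyP => hx; apply/forallP => y; apply/implyP => hy.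
apply/implyP.
case/setU1P: hx => [->|xC].
- case/setU1P: hy => [->|yC]; first by rewrite eqxx.
  by move=> _; exact: ev_C.
- case/setU1P: hy => [->|yC]; first by move=> _; rewrite e_sym; apply: ev_C.
  case/andP: Ck => _ /forallP /(_ x); rewrite xC /= => /forallP /(_ y).
  by rewrite yC /= => /implyP.
Qed.

Lemma p_sub (tau : {set T}) : kclique e k tau -> tau \subset v |: C -> v \notin tau -> tau = C.
Proof.
move=> /andP [/eqP ct _] ts vt.
apply/eqP; rewrite eqEcard ct cardC leqnn andbT.
apply/subsetP => x xt; have := subsetP ts x xt; case/setU1P => // xv.
by move: vt; rewrite -xv xt.
Qed.

Lemma pr_clique (tau : {set T}) : kclique e k tau -> kclique e k (pr tau).
Proof. by rewrite /pr; case: ifP. Qed.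

Lemma proj_walk (tau : {set T}) w tau' : kclique e k tau -> kwalk_from e k tau w tau' -> inW W w ->
  kwalk_from e k (pr tau) (filter (fun st : {set T} * {set T} => v \notin st.1) w) (pr tau')
  && inW V (filter (fun st : {set T} * {set T} => v \notin st.1) w).
Proof.
elim: w tau => [|[s t] w IH] tau /=; first by move=> _ /eqP ->; rewrite eqxx.
move=> ktau /and5P [ks ts kt tsub hw] /andP [sW iw].
have /andP [IH1 IH2] := IH t kt hw iw.
case vs: (v \in s) => /=.
- have es := sigma_eq ks sW vs.
  have -> : pr tau = C.
    rewrite /pr; case: ifP => // vt; apply: p_sub => //; first by rewrite -es.
    by rewrite vt.
  have <- : pr t = C.
    rewrite /pr; case: ifP => // vt; apply: p_sub => //; first by rewrite -es.
    by rewrite vt.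
  by rewrite IH1 IH2.
- have vt : v \notin t by apply/negP => /(subsetP tsub); rewrite vs.
  have vtau : v \notin tau by apply/negP => /(subsetP ts); rewrite vs.
  have prt : pr t = t by rewrite /pr (negbTE vt).
  have prtau : pr tau = tau by rewrite /pr (negbTE vtau).
  rewrite prt in IH1; rewrite prtau ks ts kt tsub IH1 IH2 /= andbT.
  apply/subsetP => x xs; have := subsetP sW x xs; case/setU1P => // xv.
  by move: vs; rewrite -xv xs.
Qed.

Lemma has_v (tau : {set T}) w tau' : kwalk_from e k tau w tau' -> tau != tau' ->
  (v \in tau) || (v \in tau') -> has (fun st : {set T} * {set T} => v \in st.1) w.
Proof.
elim: w tau => [|[s t] w IH] tau /=; first by move=> /eqP ->; rewrite eqxx.
move=> /and5P [ks ts kt tsub hw] ne /orP [vt|vt'].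
- by rewrite (subsetP ts v vt).
- case vs: (v \in s) => //=; case: (eqVneq t tau') => [ett|nt].
  + have : v \in t by rewrite ett.
    by move/(subsetP tsub); rewrite vs.
  + by apply: (IH t) => //; rewrite vt' orbT.
Qed.

Lemma filter_lt (tau : {set T}) w tau' : kwalk_from e k tau w tau' -> tau != tau' ->
  (v \in tau) || (v \in tau') ->
  size (filter (fun st : {set T} * {set T} => v \notin st.1) w) < size w.
Proof.
move=> hw ne hv; have := has_v hw ne hv; rewrite has_count size_filter.
rewrite -(count_predC (fun st : {set T} * {set T} => v \notin st.1) w).
have -> : count (predC (fun st : {set T} * {set T} => v \notin st.1)) w =
          count (fun st : {set T} * {set T} => v \in st.1) w.
  by apply: eq_count => x /=; rewrite negbK.
move=> h; lia.
Qed.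

Lemma inW_sub (V1 V2 : {set T}) w : V1 \subset V2 -> inW V1 w -> inW V2 w.
Proof.
move=> sub /allP h; apply/allP => x xw; exact: subset_trans (h x xw) sub.
Qed.

Lemma VW : V \subset W.
Proof. by apply/subsetP => x xV; rewrite !inE xV orbT. Qed.

Lemma old_dist (tau tau' : {set T}) d : tau \in KC V -> tau' \in KC V ->
  isdist V tau tau' d -> isdist W tau tau' d.
Proof.
rewrite !inE => /andP [kt tV] /andP [kt' tV'] [[w /and3P [hw iw sw]] m].
split; first by exists w; rewrite hw sw (inW_sub VW iw).
move=> w' /andP [_ hw'] iw'.
have /andP [h1 h2] := proj_walk kt hw' iw'.
have vt : v \notin tau by apply/negP => /(subsetP tV); rewrite (negbTE vV).
have vt' : v \notin tau' by apply/negP => /(subsetP tV'); rewrite (negbTE vV).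
move: h1; rewrite /pr (negbTE vt) (negbTE vt') => h1.
apply: leq_trans (m _ _ h2) _; first by rewrite /is_kwalk kt h1.
by rewrite size_filter count_size.
Qed.

Lemma clique_sub (X Y : {set T}) : X \subset Y -> is_clique e Y -> is_clique e X.
Proof.
move=> XY /forallP cl; apply/forallP => x; apply/implyP => xX; apply/forallP => y.
apply/implyP => yX; have := cl x; rewrite (subsetP XY x xX) /= => /forallP /(_ y).
by rewrite (subsetP XY y yX).
Qed.

Lemma Nu_sub u : Nu u \subset v |: C.
Proof. by apply: setUS; apply: subsetDl. Qed.

Lemma v_Nu u : v \in Nu u.
Proof. by rewrite /Nu setU11. Qed.

Lemma Nu_clique u : u \in C -> kclique e k (Nu u).
Proof.
move=> uC; apply/andP; split; last first.
  by apply: (clique_sub (Nu_sub u)); case/andP: vC_clique.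
have h := cardsD1 u C; rewrite uC cardC in h.
rewrite /Nu cardsU1 !inE negb_and vC orbT /=; lia.
Qed.

Lemma vCW : v |: C \subset W.
Proof. by apply: setUS. Qed.

Lemma KC_Nu u : u \in C -> Nu u \in KC W.
Proof.
by move=> uC; rewrite inE Nu_clique //= (subset_trans (Nu_sub u) vCW).
Qed.

Lemma KC_old X : X \in KC V -> X \in KC W.
Proof. by rewrite !inE => /andP [-> h]; rewrite (subset_trans h VW). Qed.

Lemma Nu_notKC u : Nu u \notin KC V.
Proof.
rewrite inE negb_and; apply/orP; right; apply/negP => /subsetP /(_ v (v_Nu u)).
by rewrite (negbTE vV).
Qed.

Lemma Nu_inj u u' : u \in C -> u' \in C -> Nu u = Nu u' -> u = u'.
Proof.
move=> uC u'C eN; apply/eqP; apply/negP => /negP ne.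
have : u \in Nu u' by rewrite /Nu !inE eq_sym ne uC orbT.
rewrite -eN /Nu !inE eqxx /= orbF => /eqP uv.
by move: vC; rewrite -uv uC.
Qed.

Lemma KC_step X : X \in KC W -> X \in KC V \/ exists2 u, u \in C & X = Nu u.
Proof.
rewrite inE => /andP [kX XW]; case vX: (v \in X).
- right; case/andP: (kX) => /eqP cX clX.
  have Ysub := sub_nbr XW vX clX.
  have cY : #|X :\ v| = k.-1 by move: cX; rewrite (cardsD1 v) vX /=; lia.
  have cD : #|C :\: (X :\ v)| = 1.
    rewrite cardsD cardC (setIidPr Ysub) cY; lia.
  have [u] : exists u, u \in C :\: (X :\ v) by apply/card_gt0P; rewrite cD.
  rewrite inE => /andP [uY uC]; exists u => //.
  have eY : X :\ v = C :\ u.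
    apply/eqP; rewrite eqEcard.
    have h := cardsD1 u C; rewrite uC cardC in h.
    have -> : #|C :\ u| = k.-1 by lia.
    rewrite cY leqnn andbT; apply/subsetP => x xY; rewrite !inE (subsetP Ysub x xY) andbT.
    by apply/eqP => xu; move: uY; rewrite -xu xY.
  by rewrite /Nu -eY setD1K.
- left; rewrite inE kX /=; apply/subsetP => x xX.
  have := subsetP XW x xX; case/setU1P => // xv.
  by move: vX; rewrite -xv xX.
Qed.

Lemma new_dist1 u (tau : {set T}) d : u \in C -> tau \in KC V ->
  isdist V C tau d -> isdist W (Nu u) tau d.+1.
Proof.
move=> uC; rewrite inE => /andP [kt tV] [[w /and3P [/andP [_ hw] iw /eqP sw]] m].
have vt : v \notin tau by apply/negP => /(subsetP tV); rewrite (negbTE vV).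
split.
- exists ((v |: C, C) :: w); rewrite /is_kwalk /= Nu_clique // vC_clique Nu_sub Ck.
  by rewrite subsetU1 hw vCW (inW_sub VW iw) sw eqxx.
- move=> w' /andP [kN hw'] iw'.
  have /andP [h1 h2] := proj_walk kN hw' iw'.
  have prN : pr (Nu u) = C by rewrite /pr v_Nu.
  have prt : pr tau = tau by rewrite /pr (negbTE vt).
  rewrite prN prt in h1.
  have := m _ (introT andP (conj Ck h1)) h2.
  have ne : Nu u != tau by apply/eqP => eN; move: vt; rewrite -eN v_Nu.
  have := filter_lt hw' ne; rewrite v_Nu /= => /(_ isT).
  move=> a b; exact: leq_ltn_trans b a.
Qed.

Lemma new_dist2 u (tau : {set T}) d : u \in C -> tau \in KC V ->
  isdist V tau C d -> isdist W tau (Nu u) d.+1.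
Proof.
move=> uC; rewrite inE => /andP [kt tV] [[w /and3P [/andP [_ hw] iw /eqP sw]] m].
have vt : v \notin tau by apply/negP => /(subsetP tV); rewrite (negbTE vV).
split.
- exists (w ++ [:: (v |: C, Nu u)]); rewrite /is_kwalk kt /=.
  rewrite (kwalk_cat hw) /=; last by rewrite vC_clique subsetU1 Nu_clique // Nu_sub eqxx.
  have iw2 := inW_sub VW iw; rewrite /inW in iw2; by rewrite /inW all_cat iw2 /= vCW size_cat sw addn1 eqxx.
- move=> w' /andP [kN hw'] iw'.
  have /andP [h1 h2] := proj_walk kN hw' iw'.
  have prN : pr (Nu u) = C by rewrite /pr v_Nu.
  have prt : pr tau = tau by rewrite /pr (negbTE vt).
  rewrite prN prt in h1.
  have := m _ (introT andP (conj kt h1)) h2.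
  have ne : tau != Nu u by apply/eqP => eN; move: vt; rewrite eN v_Nu.
  have := filter_lt hw' ne; rewrite v_Nu orbT => /(_ isT).
  move=> a b; exact: leq_ltn_trans b a.
Qed.

Lemma new_new u u' : u \in C -> u' \in C -> u != u' -> isdist W (Nu u) (Nu u') 1.
Proof.
move=> uC u'C ne; split.
- exists [:: (v |: C, Nu u')]; rewrite /is_kwalk /= Nu_clique // vC_clique !Nu_sub.
  by rewrite Nu_clique // eqxx /inW /= vCW.
- case => [|x w] //; rewrite /is_kwalk /= => /andP [_ /eqP eN].
  by move: ne; rewrite (Nu_inj uC u'C eN) eqxx.
Qed.

End Step.

Lemma ktree_card V : ktree_on e k V -> k <= #|V|.
Proof.
elim => [V0 /andP [/eqP -> _] //|V0 v C _ IH vV _ _ _].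
by rewrite cardsU1 vV; apply: leq_trans IH _; apply: leq_addl.
Qed.

Lemma base_KC V : kclique e k V -> KC V = [set V].
Proof.
move=> kV; apply/setP => X; rewrite !inE; case: (eqVneq X V) => [->|ne]; first by rewrite kV subxx.
apply/negbTE; apply/negP => /andP [kX XV]; move: ne; suff -> : X = V by rewrite eqxx.
apply/eqP; rewrite eqEcard XV; case/andP: kX => /eqP -> _; by case/andP: kV => /eqP -> _; rewrite leqnn.
Qed.

Lemma dist_struct V : ktree_on e k V -> forall tau tau', tau \in KC V -> tau' \in KC V ->
  exists d, isdist V tau tau' d.
Proof.
elim => [V0 kV|V0 v C hV IH vV CV Ck hN] tau tau'.
  rewrite base_KC // !inE => /eqP -> /eqP ->; exists 0; exact: isdist_refl.
have CK : C \in KC V0 by rewrite inE Ck CV.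
move=> /(KC_step vV CV Ck hN) [t1|[u uC ->]] /(KC_step vV CV Ck hN) [t2|[u' u'C ->]].
- have [d hd] := IH _ _ t1 t2; exists d; exact: (old_dist vV CV Ck hN t1 t2 hd).
- have [d hd] := IH _ _ t1 CK; exists d.+1; exact: (new_dist2 vV CV Ck hN u'C t1 hd).
- have [d hd] := IH _ _ CK t2; exists d.+1; exact: (new_dist1 vV CV Ck hN uC t2 hd).
- case: (eqVneq u u') => [<-|ne].
    by exists 0; apply: isdist_refl; apply: (Nu_clique vV CV Ck hN uC).
  by exists 1; apply: (new_new vV CV Ck hN uC u'C ne).
Qed.

Local Open Scope ring_scope.

Lemma det_perm_seq n (g : {set T} -> {set T} -> rat) (s s' : seq {set T}) :
  size s = n -> size s' = n -> perm_eq s s' ->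
  \det (\matrix_(i, j < n) g (nth set0 s i) (nth set0 s j)) =
  \det (\matrix_(i, j < n) g (nth set0 s' i) (nth set0 s' j)).
Proof.
move=> ss ss' p; have ts : size s' == n by rewrite ss'.
have /tuple_permP [q hq] : perm_eq s (Tuple ts) by [].
have hn : forall i : 'I_n, nth set0 s i = nth set0 s' (q i).
  move=> i; rewrite hq -(tnth_nth set0) tnth_mktuple (tnth_nth set0) //.
have -> : \matrix_(i, j < n) g (nth set0 s i) (nth set0 s j) =
   \matrix_(i, j < n) (fun a b : 'I_n => g (nth set0 s' a) (nth set0 s' b)) (q i) (q j).
  by apply/matrixP => i j; rewrite !mxE !hn.
exact: det_perm_inv.
Qed.

Lemma det_main V : ktree_on e k V -> forall (f : {set T} -> {set T} -> nat),
  (forall tau tau', tau \in KC V -> tau' \in KC V -> isdist V tau tau' (f tau tau')) ->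
  forall n (s : seq {set T}), size s = n -> uniq s -> s =i KC V ->
  forall t : rat,
  \det (\matrix_(i, j < n) ((f (nth set0 s i) (nth set0 s j))%:R + t)) =
  (-1) ^+ (k * (#|V| - k)) * (k.+1)%:R ^+ (#|V| - k) *
     (t + (#|V| - k)%:R * k%:R / (k.+1)%:R).
Proof.
elim => [V0 kV|V0 v C hV IH vV CV Ck hN] f hf n s ss us ms t.
  have ps : perm_eq s [:: V0].
    apply: uniq_perm => // X; rewrite ms base_KC // !inE; done.
  have n1 : n = 1%N by rewrite -ss (perm_size ps).
  have ss1 : size s = 1%N by rewrite ss n1.
  clear ss; subst n.
  rewrite (det_perm_seq (fun X Y => (f X Y)%:R + t) ss1 (erefl 1%N : size [:: V0] = 1%N) ps) det_mx11 mxE /=.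
  have K0 : V0 \in KC V0 by rewrite base_KC // inE.
  have -> : f V0 V0 = 0%N by apply: (isdist_uniq (hf _ _ K0 K0) (isdist_refl _ kV)).
  have -> : (#|V0| - k = 0)%N by case/andP: kV => /eqP ->; rewrite subnn.
  by rewrite muln0 !expr0 !mul0r addr0 add0r !mul1r.
have CK : C \in KC V0 by rewrite inE Ck CV.
have hf0 : forall tau tau', tau \in KC V0 -> tau' \in KC V0 -> isdist V0 tau tau' (f tau tau').
  move=> a b ha hb; have [d hd] := dist_struct hV ha hb.
  have := isdist_uniq (hf _ _ (KC_old v ha) (KC_old v hb)) (old_dist vV CV Ck hN ha hb hd).
  by move=> ->.
set s0 := enum (KC V0); set N := #|KC V0|.
set news := map (Nu v C) (enum C).
have s0N : size s0 = N by rewrite /N cardE.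
have newsk : size news = k by rewrite size_map -cardE (cardC Ck).
have un : uniq (s0 ++ news).
  rewrite cat_uniq enum_uniq /=; apply/andP; split.
  - apply/hasPn => X /mapP [u _ ->]; rewrite mem_enum; exact: (Nu_notKC C vV u).
  - rewrite map_inj_in_uniq ?enum_uniq // => a b; rewrite !mem_enum => ha hb.
    exact: (Nu_inj vV CV ha hb).
have ps : perm_eq s (s0 ++ news).
  apply: uniq_perm => // X; rewrite ms mem_cat mem_enum.
  apply/idP/idP.
  - move/(KC_step vV CV Ck hN) => [->|[u uC ->]] //; apply/orP; right.
    by apply/mapP; exists u => //; rewrite mem_enum.
  - case/orP => [/(KC_old v) //|/mapP [u]]; rewrite mem_enum => uC ->.
    exact: (KC_Nu vV CV Ck hN uC).
have ss1 : size (s0 ++ news) = (N + k)%N by rewrite size_cat s0N newsk.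
have ss2 : size s = (N + k)%N by rewrite (perm_size ps).
have nN : n = (N + k)%N by rewrite -ss ss2.
clear ss; subst n.
rewrite (det_perm_seq (fun X Y => (f X Y)%:R + t) ss2 ss1 ps).
have cN : (index C s0 < N)%N by rewrite -s0N index_mem mem_enum.
set c : 'I_N := Ordinal cN.
have s0c : nth set0 s0 c = C by rewrite nth_index // mem_enum.
set A := \matrix_(i, j < N) ((f (nth set0 s0 i) (nth set0 s0 j))%:R + t).
have hnl : forall i : 'I_N, nth set0 (s0 ++ news) (lshift k i) = nth set0 s0 i.
  by move=> i; rewrite nth_cat s0N /= ltn_ord.
have hnr : forall j : 'I_k, nth set0 (s0 ++ news) (rshift N j) = Nu v C (nth v (enum C) j).
  move=> j; rewrite nth_cat s0N /= ltnNge leq_addr /= addKn (nth_map v) //.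
  by rewrite -cardE (cardC Ck).
have s0K : forall i : 'I_N, nth set0 s0 i \in KC V0.
  by move=> i; rewrite -mem_enum mem_nth // s0N.
have uC : forall j : 'I_k, nth v (enum C) j \in C.
  by move=> j; rewrite -mem_enum mem_nth // -cardE (cardC Ck).
have fCC : f C C = 0%N by apply: (isdist_uniq (hf0 _ _ CK CK) (isdist_refl _ Ck)).
have hM : \matrix_(i, j < N + k) ((f (nth set0 (s0 ++ news) i) (nth set0 (s0 ++ news) j))%:R + t)
   = block_mx A (\matrix_(i < N, j < k) (A i c + 1)) (\matrix_(i < k, j < N) (A c j + 1))
       (\matrix_(i < k, j < k) (A c c + 1 - (i == j)%:R)).
  rewrite -[LHS]submxK; congr block_mx; apply/matrixP => i j; rewrite !mxE ?hnl ?hnr ?s0c.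
  - by [].
  - rewrite (isdist_uniq (hf _ _ (KC_old v (s0K i)) (KC_Nu vV CV Ck hN (uC j)))
      (new_dist2 vV CV Ck hN (uC j) (s0K i) (hf0 _ _ (s0K i) CK))).
    by rewrite -addn1 natrD; ring.
  - rewrite (isdist_uniq (hf _ _ (KC_Nu vV CV Ck hN (uC i)) (KC_old v (s0K j)))
      (new_dist1 vV CV Ck hN (uC i) (s0K j) (hf0 _ _ CK (s0K j)))).
    by rewrite -addn1 natrD; ring.
  - rewrite fCC; case: (eqVneq i j) => [<-|ne].
    + rewrite (isdist_uniq (hf _ _ (KC_Nu vV CV Ck hN (uC i)) (KC_Nu vV CV Ck hN (uC i)))
        (isdist_refl _ (Nu_clique vV CV Ck hN (uC i)))) /=; ring.
    + have une : nth v (enum C) i != nth v (enum C) j.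
        by rewrite nth_uniq ?enum_uniq // -cardE (cardC Ck).
      rewrite (isdist_uniq (hf _ _ (KC_Nu vV CV Ck hN (uC i)) (KC_Nu vV CV Ck hN (uC j)))
        (new_new vV CV Ck hN (uC i) (uC j) une)) /=; ring.
rewrite hM key.
have hA : A + const_mx (k%:R / (k.+1)%:R) =
  \matrix_(i, j < N) ((f (nth set0 s0 i) (nth set0 s0 j))%:R + (t + k%:R / (k.+1)%:R)).
  by apply/matrixP => i j; rewrite !mxE addrA.
rewrite hA (IH f hf0 N s0 s0N (enum_uniq _) (mem_enum _)).
have kV := ktree_card hV.
have -> : (#|v |: V0| - k = (#|V0| - k).+1)%N by rewrite cardsU1 vV /=; lia.
set b := (#|V0| - k)%N.
rewrite mulnS exprD exprS -addn1 natrD; ring.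
Qed.

End G.


Unset Implicit Arguments. Set Strict Implicit.
Local Open Scope ring_scope.

Theorem mainTheorem3 (k n : nat) (T : finType) (e : rel T)
  (e_sym : symmetric e) (e_irr : irreflexive e)
  (hk : (1 <= k)%N) (hn : (k + 2 <= n)%N) (hcard : #|T| = n)
  (htree : is_ktree e k) :
  \det (kdist_matrix e k) =
    (-1) ^+ (k * (n - k)) * k%:Z * (k.+1)%:Z ^+ (n - k - 1) * (n - k)%:Z.
Proof.
pose s := enum (kcliques e k).
have hf : forall tau tau', tau \in KC e k setT -> tau' \in KC e k setT ->
    isdist e k setT tau tau' (kdist e k tau tau').
  move=> a b ha hb; have [d hd] := dist_struct e_sym hk htree ha hb.
  by rewrite (kdist_of hd).
have ms : s =i KC e k setT by move=> X; rewrite mem_enum !inE subsetT andbT.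
have h := det_main e_sym hk htree hf (esym (cardE _)) (enum_uniq _) ms 0.
have hmap : map_mx (intr : int -> rat) (kdist_matrix e k) =
   \matrix_(i, j) ((kdist e k (nth set0 s i) (nth set0 s j))%:R + 0).
  apply/matrixP => i j; rewrite !mxE !(enum_val_nth set0) addr0.
  case: eqP => [->|_]; last by rewrite -pmulrn.
  have : nth set0 s j \in s by rewrite mem_nth // -cardE.
  rewrite mem_enum inE => kX.
  by rewrite (kdist_of (isdist_refl setT kX)).
apply: (@intr_inj rat).
rewrite -det_map_mx hmap h cardsT hcard.
have -> : (n - k = (n - k - 1).+1)%N by lia.
set b := (n - k - 1)%N.
rewrite !rmorphM /= !rmorphXn /= rmorphN1 /=.
rewrite exprS -!pmulrn.
rewrite subn1 /=.
have hk0 : (k.+1)%:R != 0 :> rat by rewrite pnatr_eq0.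
field.
by rewrite addrC natr1.
Qed.
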